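(* Let $R_0,r,V_T>0$ and define, for $t\ge 0$ and $V_s>0$, $$f(t,V_s)=1+\frac{1}{2R_0(R_0+r)}\left(r^2-V_T^2\left(\frac{2\pi R_0}{V_s}+t\right)^2\right)-\cos\!\left(\frac{V_s t}{R_0}\right).$$ Let $\Omega=\{(t,V_s): V_s>0,\ 0\le t\le \frac{\pi R_0}{2V_s}\}$. Then $\frac{\partial f}{\partial V_s}(t,V_s)>0$ for all $(t,V_s)\in\Omega$. Consequently $f$, as a function of the two variables $(t,V_s)$, has no critical (in particular no minimum) points in the interior of $\Omega$, and $f$ is monotonically increasing in $V_s$ on $\Omega$: for each fixed $t\ge 0$, $V_s\mapsto f(t,V_s)$ is increasing on $\{V_s>0: t\le \pi R_0/(2V_s)\}$.
   Context: Here $R_0$ is the initial radius of the disk containing the evaders, $2r$ is the length of the sweeper's line sensor, $V_T$ is the maximal evader speed, and $V_s$ is the sweeper's speed. The times of interest are $0\le t\le \pi R_0/(2V_s)$, i.e. up to a quarter revolution of the sweeper around the disk. *)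

(* Defs.v *)
From Stdlib Require Import Reals Lra.
From Coquelicot Require Import Coquelicot.
Open Scope R_scope.

Definition fsweep (Rzero r VT : R) (t Vs : R) : R :=
  1 + / (2 * Rzero * (Rzero + r)) * (r ^ 2 - VT ^ 2 * (2 * PI * Rzero / Vs + t) ^ 2)
    - cos (Vs * t / Rzero).

Definition Omega (Rzero : R) (t Vs : R) : Prop :=
  0 < Vs /\ 0 <= t <= PI * Rzero / (2 * Vs).

Definition Omega_int (Rzero : R) (t Vs : R) : Prop :=
  0 < Vs /\ 0 < t < PI * Rzero / (2 * Vs).

(* Main.v *)
Require Import Defs.
From Stdlib Require Import Reals Lra.
From Coquelicot Require Import Coquelicot.
Open Scope R_scope.

Definition dfv (Rzero r VT t v : R) : R :=
  / (2 * Rzero * (Rzero + r)) * (VT ^ 2 * (2 * (2 * PI * Rzero / v + t)) * (2 * PI * Rzero / v ^ 2))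
  + sin (v * t / Rzero) * (t / Rzero).

Lemma dfv_ok Rzero r VT t v : 0 < Rzero -> 0 < r -> 0 < v ->
  is_derive (fun v => fsweep Rzero r VT t v) v (dfv Rzero r VT t v).
Proof. intros. unfold fsweep, dfv. auto_derive.
 - repeat split; lra.
 - unfold Rdiv. field. split; [lra|]. split; lra.
Qed.

Lemma dfv_pos Rzero r VT t v : 0 < Rzero -> 0 < r -> 0 < VT -> 0 < v ->
  0 <= t <= PI * Rzero / (2 * v) -> 0 < dfv Rzero r VT t v.
Proof. intros h0 hr hv hvv [ht1 ht2]. unfold dfv.
  assert (HP := PI_RGT_0).
  apply Rplus_lt_le_0_compat.
  - apply Rmult_lt_0_compat. apply Rinv_0_lt_compat.
    apply Rmult_lt_0_compat; lra.
    apply Rmult_lt_0_compat. apply Rmult_lt_0_compat. apply pow_lt; lra.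
    apply Rmult_lt_0_compat. lra.
    apply Rplus_lt_le_0_compat; [|lra]. unfold Rdiv.
    apply Rmult_lt_0_compat. apply Rmult_lt_0_compat; lra. apply Rinv_0_lt_compat; lra.
    unfold Rdiv. apply Rmult_lt_0_compat. apply Rmult_lt_0_compat; lra.
    apply Rinv_0_lt_compat; apply pow_lt; lra.
  - apply Rmult_le_pos.
    + apply sin_ge_0.
      * unfold Rdiv. apply Rmult_le_pos. apply Rmult_le_pos; lra. left; apply Rinv_0_lt_compat; lra.
      * assert (v * t <= PI * Rzero / 2).
        { apply Rmult_le_compat_l with (r := v) in ht2; [|lra].
          replace (v * (PI * Rzero / (2 * v))) with (PI * Rzero / 2) in ht2 by (field; lra). lra. }
        apply Rmult_le_reg_r with Rzero; auto.
        replace (v * t / Rzero * Rzero) with (v * t) by (field; lra). nra.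
    + unfold Rdiv. apply Rmult_le_pos; [lra|]. left; apply Rinv_0_lt_compat; lra.
Qed.

Theorem theorem3 (Rzero r VT : R) (hR0 : 0 < Rzero) (hr : 0 < r) (hVT : 0 < VT) :
  (* the partial derivative in V_s exists and is positive on Omega *)
  (forall t Vs, Omega Rzero t Vs ->
     ex_derive (fun v => fsweep Rzero r VT t v) Vs /\
     Derive (fun v => fsweep Rzero r VT t v) Vs > 0) /\
  (* no critical points of f(t,V_s) in the interior of Omega *)
  (forall t Vs, Omega_int Rzero t Vs ->
     ~ (is_derive (fun s => fsweep Rzero r VT s Vs) t 0 /\
        is_derive (fun v => fsweep Rzero r VT t v) Vs 0)) /\
  (* monotonically increasing in V_s for fixed t >= 0 *)
  (forall t v1 v2, 0 <= t -> 0 < v1 -> v1 < v2 ->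
     t <= PI * Rzero / (2 * v2) ->
     fsweep Rzero r VT t v1 < fsweep Rzero r VT t v2).
Proof.
  split; [|split].
  - intros t Vs [hv ht]. split.
    + eexists. apply dfv_ok; auto.
    + erewrite is_derive_unique; [|apply dfv_ok; auto].
      apply dfv_pos; auto.
  - intros t Vs [hv ht] [_ hd].
    assert (E := is_derive_unique _ _ _ hd).
    assert (E2 := is_derive_unique _ _ _ (dfv_ok Rzero r VT t Vs hR0 hr hv)).
    assert (P := dfv_pos Rzero r VT t Vs hR0 hr hVT hv ltac:(lra)). rewrite E2 in E. lra.
  - intros t v1 v2 ht h1 h12 ht2.
    assert (HP := PI_RGT_0).
    destruct (MVT_gen (fun v => fsweep Rzero r VT t v) v1 v2 (dfv Rzero r VT t)) as [c [hc E]].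
    + intros x hx. rewrite Rmin_left in hx by lra. apply dfv_ok; lra.
    + intros x hx. rewrite Rmin_left in hx by lra.
      apply continuity_pt_filterlim. apply (ex_derive_continuous (fun v => fsweep Rzero r VT t v)).
      eexists. apply dfv_ok; lra.
    + rewrite Rmin_left in hc by lra. rewrite Rmax_right in hc by lra.
      assert (0 < dfv Rzero r VT t c).
      { apply dfv_pos; try lra. split; auto.
        apply Rle_trans with (1 := ht2). unfold Rdiv.
        apply Rmult_le_compat_l. nra.
        apply Rinv_le_contravar; lra. }
      assert (0 < dfv Rzero r VT t c * (v2 - v1)) by (apply Rmult_lt_0_compat; lra).
      lra.
Qed.
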